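(* Let $\Omega$ be a finite set and let $P=(p_i)_{i\in\Omega}$ and $Q=(q_i)_{i\in\Omega}$ be probability distributions on $\Omega$, both with support $\Omega$. Let $(e_i)_{i\in\Omega}$ be independent $\mathrm{Exp}(1)$ random variables, and set $\tilde{x}=\arg\min_{i\in\Omega} e_i/q_i$ (the drafted token) and $x^{next}=\arg\min_{i\in\Omega} e_i/p_i$. Let $P_{accept}^{(1)}=\Pr[\tilde{x}=x^{next}]$ be the probability that the first drafted token is accepted in exponential race speculative decoding. Then $$1-D_{TV}[P,Q]\;\ge\; P_{accept}^{(1)}\;\ge\; D_{HM}[P,Q],$$ where $D_{TV}[P,Q]=\frac12\sum_{i\in\Omega}|p_i-q_i|$ and $D_{HM}[P,Q]=\sum_{i\in\Omega}\frac{p_iq_i}{p_i+q_i}$.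
   Context: In exponential race speculative decoding, given the context, the draft model's next-token distribution is $Q$ and the target model's next-token distribution is $P$; one drafts the winner of the exponential race under $Q$ and accepts it iff it is also the winner of the race under $P$ driven by the same exponential variables $(e_i)$. *)

(* Defs.v *)
From HB Require Import structures.
From mathcomp Require Import all_boot all_order all_algebra.
From mathcomp Require Import all_classical all_reals all_analysis.
Set Implicit Arguments. Unset Strict Implicit. Unset Printing Implicit Defensive.
Import Order.TTheory GRing.Theory Num.Theory.
Local Open Scope classical_set_scope.
Local Open Scope ring_scope.

Definition full_support_distr (R : realType) (Omega : finType) (p : Omega -> R) :=
  (forall i, 0 < p i) /\ \sum_(i : Omega) p i = 1.

(* Mutual independence of a finite family of real random variables:
   product rule for all families of Borel events (taking B_i = setT
   recovers every subfamily). *)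
Definition mutually_independent (d : measure_display) (T : measurableType d)
    (R : realType) (P : probability T R) (I : finType) (X : I -> {RV P >-> R}) :=
  forall B : I -> set R, (forall i, measurable (B i)) ->
    P (\bigcap_(i in [set: I]) (X i @^-1` B i)) =
    (\prod_(i : I) P (X i @^-1` B i))%E.

(* Winner of the exponential race driven by e under weights w:
   argmin_i e_i / w_i (ties, a null event, broken by the library's arg_min
   starting from the default element i0). *)
Definition race_winner (R : realType) (Omega : finType) (i0 : Omega)
    (w : Omega -> R) (e : Omega -> R) : Omega :=
  Order.arg_min i0 xpredT (fun i => e i / w i).

Definition D_TV (R : realType) (Omega : finType) (p q : Omega -> R) : R :=
  2^-1 * \sum_(i : Omega) `|p i - q i|.

Definition D_HM (R : realType) (Omega : finType) (p q : Omega -> R) : R :=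
  \sum_(i : Omega) p i * q i / (p i + q i).

(* Main.v *)
Require Import Defs.
From HB Require Import structures.
From mathcomp Require Import all_boot all_order all_algebra.
From mathcomp Require Import all_classical all_reals all_analysis.
From mathcomp Require Import ring lra.
Import Order.TTheory GRing.Theory Num.Theory.
Local Open Scope classical_set_scope.
Local Open Scope ring_scope.

Set Implicit Arguments. Unset Strict Implicit. Unset Printing Implicit Defensive.


Section prob.
Context (R : realType) (d : measure_display) (T : measurableType d) (P : probability T R).

Definition pr (A : set T) : R := fine (P A).

Lemma prE A : measurable A -> P A = (pr A)%:E.
Proof. by move=> mA; rewrite /pr fineK// fin_num_measure. Qed.

Lemma pr_ge0 A : measurable A -> 0 <= pr A.
Proof. by move=> mA; rewrite -lee_fin -prE. Qed.

Lemma pr_le A B : measurable A -> measurable B -> A `<=` B -> pr A <= pr B.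
Proof. by move=> mA mB AB; rewrite -lee_fin -!prE// le_measure// inE. Qed.

Lemma pr_setT : pr setT = 1.
Proof. by rewrite /pr probability_setT. Qed.

Lemma pr_le1 A : measurable A -> pr A <= 1.
Proof. by move=> mA; rewrite -pr_setT pr_le. Qed.

Lemma pr_U A B : measurable A -> measurable B -> A `&` B = set0 ->
  pr (A `|` B) = pr A + pr B.
Proof.
move=> mA mB AB; apply: EFin_inj; rewrite -prE; last exact: measurableU.
by rewrite measureU// EFinD -!prE.
Qed.

Lemma pr_subU A B : measurable A -> measurable B -> pr (A `|` B) <= pr A + pr B.
Proof.
move=> mA mB; rewrite -lee_fin -prE; last exact: measurableU.
by rewrite EFinD -!prE// measureU2.
Qed.

Lemma pr_C A : measurable A -> pr (~` A) = 1 - pr A.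
Proof.
move=> mA; apply: EFin_inj; rewrite -prE; last exact: measurableC.
by rewrite probability_setC// prE.
Qed.

Lemma pr_fin_bigcup (I : finType) (F : I -> set T) :
  trivIset setT F -> (forall i, measurable (F i)) ->
  pr (\bigcup_(i in setT) F i) = \sum_(i : I) pr (F i).
Proof.
move=> tF mF.
apply: EFin_inj; rewrite -prE; last by apply: fin_bigcup_measurable => //; exact: finite_finset.
rewrite measure_fin_bigcup//; last exact: finite_finset.
rewrite -sumEFin (fsbigE (enum I))//; last by move=> j _; rewrite mem_enum.
- rewrite big_enum_cond /=. apply: eq_big => j; first by rewrite in_setT.
  by move=> _; rewrite -prE.
- exact: enum_uniq.
Qed.
End prob.


Section expo.
Context (R : realType) (d : measure_display) (T : measurableType d) (P : probability T R).
Variable (X : {RV P >-> R}).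
Hypothesis hX : forall (A : set R), measurable A ->
              distribution P X A = exponential_prob 1 A.

Lemma mpre (A : set R) : measurable A -> measurable (X @^-1` A).
Proof. by move=> mA; rewrite -[_ @^-1` _]setTI; apply: (measurable_funP X). Qed.

Lemma expo_neg : pr P (X @^-1` `]-oo, 0[) = 0.
Proof.
apply: EFin_inj; rewrite -prE; last exact: mpre (measurable_itv _).
have := hX (measurable_itv `]-oo, 0[); rewrite /distribution /pushforward => ->.
rewrite /exponential_prob integral0_eq //.
move=> x /=; rewrite in_itv /= => x0.
by rewrite lt0_exponential_pdf.
Qed.

Lemma expo_0c a : 0 < a -> pr P (X @^-1` `[0, a]) = 1 - expR (- a).
Proof.
move=> a0; apply: EFin_inj; rewrite -prE; last exact: mpre (measurable_itv _).
have := hX (measurable_itv `[0, a]); rewrite /distribution /pushforward => ->.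
by rewrite exponential_prob_itv0c// mulN1r EFinB.
Qed.

Lemma expo_tail a : 0 < a -> pr P (X @^-1` `]a, +oo[) = expR (- a).
Proof.
move=> a0.
have -> : `]a, +oo[%classic = ~` (`]-oo, 0[ `|` `[0, a]) :> set R.
  rewrite -setCitvl; congr (~` _); apply/predeqP => x /=; rewrite !in_itv /=.
  split; first by case: (ltP x 0) => x0 /= h; [lra| lra].
  by move=> [h|/andP[h1 h2]] //; lra.
rewrite -preimage_setC pr_C; last by apply: measurableU; exact: mpre (measurable_itv _).
rewrite preimage_setU pr_U; first by rewrite expo_neg expo_0c //; ring.
- exact: mpre (measurable_itv _).
- exact: mpre (measurable_itv _).
apply/predeqP => x /=; rewrite !in_itv /=; split => //; move=> [h1 /andP[h2 h3]]; lra.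
Qed.

Lemma expo_oc a b : 0 < a -> a <= b ->
  pr P (X @^-1` `]a, b]) = expR (- a) - expR (- b).
Proof.
move=> a0 ab.
have e : `]a, +oo[%classic = `]a, b] `|` `]b, +oo[ :> set R.
  apply/predeqP => x /=; rewrite !in_itv /=; split.
  by case: (leP x b) => xb h; [left|right]; lra.
  by move=> [/andP[h1 h2]|h]; lra.
have := expo_tail a0; rewrite e preimage_setU pr_U.
- rewrite expo_tail; last lra. move=> <-; ring.
- exact: mpre (measurable_itv _).
- exact: mpre (measurable_itv _).
apply/predeqP => x /=; rewrite !in_itv /=; split => //; move=> [/andP[h1 h2] h3]; lra.
Qed.
End expo.


Section reals.
Context (R : realType).

Lemma L1 (t δ S : R) : 0 < δ -> 0 <= S ->
  expR (- (δ * (1 + S))) / (1 + S) *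
    (expR (- (t * (1 + S))) - expR (- ((t + δ) * (1 + S))))
  <= (expR (- t) - expR (- (t + δ))) * expR (- ((t + δ) * S)).
Proof.
move=> d0 S0.
have eA : expR (- (t * (1 + S))) = expR (- t) * expR (- (t * S)).
  by rewrite -expRD; congr expR; ring.
have eB : expR (- ((t + δ) * (1 + S))) =
   expR (- t) * expR (- (t * S)) * (expR (- δ) * expR (- (δ * S))).
  by rewrite -!expRD; congr expR; ring.
have eC : expR (- (δ * (1 + S))) = expR (- δ) * expR (- (δ * S)).
  by rewrite -!expRD; congr expR; ring.
have eD : expR (- (t + δ)) = expR (- t) * expR (- δ).
  by rewrite -!expRD; congr expR; ring.
have eE : expR (- ((t + δ) * S)) = expR (- (t * S)) * expR (- (δ * S)).
  by rewrite -!expRD; congr expR; ring.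
rewrite eA eB eC eD eE.
set a := expR (- t); set b := expR (- (t * S)); set u := expR (- δ);
  set v := expR (- (δ * S)).
have a0 : 0 < a by apply: expR_gt0.
have b0 : 0 < b by apply: expR_gt0.
have u0 : 0 < u by apply: expR_gt0.
have v0 : 0 < v by apply: expR_gt0.
have h1 : u * (1 + δ) <= 1.
  have := expR_ge1Dx δ; rewrite /u expRN => h.
  by rewrite mulrC ler_pdivrMr ?expR_gt0// mul1r.
have h2 : 1 - δ * (1 + S) <= u * v.
  by rewrite -eC; have := expR_ge1Dx (- (δ * (1 + S))); lra.
have K0 : 0 < 1 + S by lra.
have -> : u * v / (1 + S) * (a * b - a * b * (u * v)) =
  (v * (a * b)) * (u * (1 - u * v)) / (1 + S) by ring.
rewrite ler_pdivrMr //.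
have h3 : u * (1 - u * v) <= (1 - u) * (1 + S) by nra.
have vab : 0 <= v * (a * b) by apply: mulr_ge0; [lra| apply: mulr_ge0; lra].
have := ler_wpM2l vab h3.
move=> h; apply: le_trans h _; rewrite le_eqVlt; apply/orP; left; apply/eqP; ring.
Qed.

Lemma expR_le_inv (y : R) : 0 <= y -> expR (- y) <= 1 / (1 + y).
Proof.
move=> y0; rewrite expRN div1r lef_pV2 ?posrE ?expR_gt0//; last lra.
exact: expR_ge1Dx.
Qed.

Lemma final_bound (x : R) : 0 <= x ->
  (forall a : R, 0 < a < 1 -> forall N : nat,
     expR (- a) * (expR (- a) - expR (- (N.+1%:R * a))) <= x) -> 1 <= x.
Proof.
move=> x0 H; rewrite leNgt; apply/negP => x1.
set eps := 1 - x.
have e0 : 0 < eps by rewrite /eps; lra.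
set a := eps / 4.
have a0 : 0 < a < 1 by rewrite /a /eps; apply/andP; split; lra.
have [N HN] : exists N : nat, 16 / (eps * eps) < N%:R.
  exists (Num.bound (16 / (eps * eps))).
  by apply: archi_boundP; apply: divr_ge0 => //; apply: mulr_ge0; lra.
have := H a a0 N.
have r1 : 1 - a <= expR (- a) by have := expR_ge1Dx (- a); lra.
have M0 : 0 <= N.+1%:R * a by apply: mulr_ge0; [exact: ler0n| lra].
have g1 : expR (- (N.+1%:R * a)) <= 1 / (1 + N.+1%:R * a).
  exact: expR_le_inv.
have g2 : 1 / (1 + N.+1%:R * a) <= a.
  rewrite ler_pdivrMr; last lra.
  have h16 : 16 < N%:R * (eps * eps).
    by rewrite -ltr_pdivrMr //; apply: mulr_gt0.
  rewrite -natr1 /a; nra.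
move=> hx.
set r := expR (- a) in hx r1.
set g := expR (- (N.+1%:R * a)) in hx g1.
have p1 : 0 <= r - (1 - a) by lra.
have p2 : 0 <= (r - g) - (1 - 2 * a) by lra.
have p3 := mulr_ge0 p1 p2.
have a4 : a * 4 = eps by rewrite /a; field.
have ex : eps = 1 - x by [].
have q1 : 0 <= 1 - 2 * a by rewrite /a /eps; lra.
have p4 := mulr_ge0 p1 q1.
have q2 : 0 <= 1 - a by lra.
have p5 := mulr_ge0 q2 p2.
have p6 : 0 <= a * a by apply: mulr_ge0; lra.
nra.
Qed.
End reals.


Section meas.
Context (R : realType) (d : measure_display) (T : measurableType d).

Lemma mlt (f g : T -> R) : measurable_fun setT f -> measurable_fun setT g ->
  measurable [set w | f w < g w].
Proof.
move=> mf mg.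
have := measurable_realfun.measurable_fun_ltr mf mg measurableT (Y := [set true]) I.
rewrite setTI; congr measurable; apply/predeqP => w /=; split => [->|/= ->] //.
Qed.

Lemma mle (f g : T -> R) : measurable_fun setT f -> measurable_fun setT g ->
  measurable [set w | f w <= g w].
Proof.
move=> mf mg.
have := measurable_realfun.measurable_fun_ler mf mg measurableT (Y := [set true]) I.
rewrite setTI; congr measurable; apply/predeqP => w /=; split => [->|/= ->] //.
Qed.
End meas.

Section race.
Context (R : realType) (d : measure_display) (T : measurableType d) (P : probability T R).
Context (Omega : finType) (e : Omega -> {RV P >-> R}).
Hypothesis hind : mutually_independent e.
Hypothesis hexp : forall i (A : set R), measurable A ->
              distribution P (e i) A = exponential_prob 1 A.

Lemma pr_rect (B : Omega -> set R) : (forall j, measurable (B j)) ->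
  pr P (\bigcap_(j in [set: Omega]) (e j @^-1` B j)) = \prod_j pr P (e j @^-1` B j).
Proof.
move=> mB; apply: EFin_inj; rewrite -prE; last first.
  apply: fin_bigcap_measurable; first exact: finite_finset.
  by move=> j _; apply: mpre.
rewrite hind // -prodEFin; apply: eq_bigr => j _; rewrite -prE //; exact: mpre.
Qed.

Variables (i : Omega) (c : Omega -> R).
Hypothesis hc : forall j, 0 < c j.

Definition Sc := \sum_(j | j != i) (c j)^-1.
Definition Ev := [set w | 0 < e i w /\ forall j, j != i -> e i w < c j * e j w].

Lemma Sc_ge0 : 0 <= Sc.
Proof. by apply: sumr_ge0 => j _; rewrite invr_ge0 ltW. Qed.

Lemma mEv : measurable Ev.
Proof.
have -> : Ev = [set w | (fun=> 0) w < e i w] `&`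
    \bigcap_(j in [set j | j != i]) [set w | e i w < c j * e j w].
  by apply/predeqP => w /=; split => [[h0 h]|[h0 h]]; split => // j /= ji; exact: h.
apply: measurableI; first by apply: mlt; [exact: measurable_cst| exact: measurable_funPT].
apply: fin_bigcap_measurable; first exact: finite_finset.
move=> j _; apply: mlt; first exact: measurable_funPT.
by apply: measurable_realfun.measurable_funM => //; exact: measurable_funPT.
Qed.

Lemma race_step (δ : R) (N : nat) : 0 < δ ->
  expR (- (δ * (1 + Sc))) * (expR (- (δ * (1 + Sc))) - expR (- (N.+1%:R * δ * (1 + Sc))))
  <= pr P Ev * (1 + Sc).
Proof.
move=> d0.
have S0 := Sc_ge0.
set K := 1 + Sc.
have K0 : 0 < K by rewrite /K; lra.
pose t (k : nat) : R := k.+1%:R * δ.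
have t0 k : 0 < t k by rewrite /t; apply: mulr_gt0 => //; rewrite ltr0n.
have tS k : t k + δ = t k.+1 by rewrite /t -[k.+2%:R]natr1 mulrDl mul1r.
have tle m n : (m < n)%N -> t m + δ <= t n.
  move=> mn; rewrite tS /t ler_pM2r // ler_nat; exact: mn.
pose B (k : nat) (j : Omega) : set R :=
  if j == i then `]t k, t k + δ]%classic else `](t k + δ) / c j, +oo[%classic.
pose Rk (k : 'I_N) := \bigcap_(j in [set: Omega]) (e j @^-1` B k j).
have mB k j : measurable (B k j) by rewrite /B; case: ifP => _; exact: measurable_itv.
have mR k : measurable (Rk k).
  apply: fin_bigcap_measurable; first exact: finite_finset.
  by move=> j _; apply: mpre.
have subE k : Rk k `<=` Ev.
  move=> w Rw; have hi0 := Rw i I.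
  rewrite /B eqxx /= in_itv /= in hi0; move/andP: hi0 => [hi0 _].
  split; first by have := t0 k; lra.
  move=> j ji; have hi := Rw i I; have hj := Rw j I.
  rewrite /B eqxx /= in_itv /= in hi.
  rewrite /B (negbTE ji) /= in_itv /= andbT in hj.
  move: hj; rewrite ltr_pdivrMr // => hj.
  move/andP: hi => [_ hi]; rewrite mulrC; lra.
have disj : trivIset setT Rk.
  move=> k k' _ _ [w [h1 h2]].
  have a1 := h1 i I; have a2 := h2 i I.
  rewrite /B eqxx /= !in_itv /= in a1 a2.
  move/andP: a1 => [a1 a1']; move/andP: a2 => [a2 a2'].
  apply: val_inj; apply/eqP; rewrite eqn_leq; apply/andP; split; rewrite leqNgt; apply/negP => lt.
  - have := tle _ _ lt; lra.
  - have := tle _ _ lt; lra.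
have prR k : pr P (Rk k) =
    (expR (- t k) - expR (- (t k + δ))) * expR (- ((t k + δ) * Sc)).
  rewrite /Rk pr_rect // (bigD1 i) //= {1}/B eqxx (expo_oc (hexp i)) //; last lra.
  congr (_ * _).
  rewrite /Sc mulr_sumr -sumrN expR_sum; apply: eq_bigr => j ji.
  rewrite /B (negbTE ji) (expo_tail (hexp j)) //; last by apply: divr_gt0 => //; have := t0 k; lra.
have step1 : \sum_(k < N) pr P (Rk k) <= pr P Ev.
  rewrite -pr_fin_bigcup //; apply: pr_le.
  - by apply: fin_bigcup_measurable => //; exact: finite_finset.
  - exact: mEv.
  - by move=> w [k _]; apply: subE.
have step2 : \sum_(k < N) (expR (- (δ * K)) / K *
      (expR (- (t k * K)) - expR (- ((t k + δ) * K)))) <= \sum_(k < N) pr P (Rk k).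
  by apply: ler_sum => k _; rewrite prR; apply: L1.
pose h (n : nat) := expR (- (n.+1%:R * δ * K)).
have step3 : \sum_(k < N) (expR (- (δ * K)) / K *
      (expR (- (t k * K)) - expR (- ((t k + δ) * K)))) =
    expR (- (δ * K)) / K * (h 0%N - h N).
  rewrite -mulr_sumr; congr (_ * _).
  have hk k : expR (- (t k * K)) - expR (- ((t k + δ) * K)) = - (h k.+1 - h k).
    by rewrite tS /h /t; ring.
  under eq_bigr do rewrite hk.
  rewrite sumrN -(big_mkord xpredT (fun k => h k.+1 - h k)) telescope_sumr //; ring.
rewrite step3 in step2.
have H := le_trans step2 step1.
rewrite /h mul1r in H.
rewrite -ler_pdivrMr //; apply: le_trans H.
rewrite le_eqVlt; apply/orP; left; apply/eqP; rewrite /K; ring.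
Qed.

Lemma race_lb : 1 <= pr P Ev * (1 + Sc).
Proof.
have S0 := Sc_ge0.
apply: final_bound.
  by apply: mulr_ge0; [apply: pr_ge0; exact: mEv | lra].
move=> a /andP[a0 a1] N.
have K0 : 0 < 1 + Sc by lra.
have := race_step N (divr_gt0 a0 K0).
have -> : a / (1 + Sc) * (1 + Sc) = a by field; lra.
by have -> : N.+1%:R * (a / (1 + Sc)) * (1 + Sc) = N.+1%:R * a by field; lra.
Qed.
End race.


Section winner.
Context (R : realType) (Omega : finType) (i0 : Omega).

Lemma race_winnerE (w F : Omega -> R) :
  race_winner i0 w F = odflt i0 (pick (fun k => [forall j, F k / w k <= F j / w j])).
Proof.
by rewrite /race_winner /Order.arg_min /extremum /=; congr odflt; apply: eq_pick => k /=.
Qed.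

Lemma winner_strict (w F : Omega -> R) k :
  (forall j, j != k -> F k / w k < F j / w j) -> race_winner i0 w F = k.
Proof.
move=> H; rewrite /race_winner; case: arg_minP => // m _ Hm.
apply/eqP; apply/negP => /negP mk.
have := Hm k isT; have := H m mk; rewrite leNgt => -> //.
Qed.
End winner.

Section wmeas.
Context (R : realType) (d : measure_display) (T : measurableType d) (P : probability T R).
Context (Omega : finType) (i0 : Omega) (e : Omega -> {RV P >-> R}).

Definition W (w : Omega -> R) (k : Omega) :=
  [set om | race_winner i0 w (fun j => e j om) = k].

Lemma mdiv (w : Omega -> R) j : measurable_fun setT (fun om => e j om / w j).
Proof.
apply: measurable_realfun.measurable_funM; first exact: measurable_funPT.
exact: measurable_cst.
Qed.

Lemma mW w k : measurable (W w k).
Proof.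
pose pi om k := [forall j, e k om / w k <= e j om / w j].
have -> : W w k = \bigcup_(s in [set s : {ffun Omega -> bool} |
                                 odflt i0 (pick (fun k => s k)) = k])
            \bigcap_(l in [set: Omega]) [set om | pi om l = s l].
  apply/predeqP => om; rewrite /W /= race_winnerE; split.
  - move=> h; exists [ffun l => pi om l].
      by rewrite /= -h; congr odflt; apply: eq_pick => l; rewrite ffunE.
    by move=> l _ /=; rewrite ffunE.
  - move=> [s /= hs hom]; rewrite -hs; congr odflt; apply: eq_pick => l /=.
    exact: hom.
apply: fin_bigcup_measurable; first exact: finite_finset.
move=> s _; apply: fin_bigcap_measurable; first exact: finite_finset.
move=> l _.
have mB : measurable [set om | pi om l].
  have -> : [set om | pi om l] =
      \bigcap_(j in [set: Omega]) [set om | e l om / w l <= e j om / w j].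
    apply/predeqP => om /=; split.
    - by move=> /forallP h j _; exact: h.
    - by move=> h; apply/forallP => j; exact: h.
  apply: fin_bigcap_measurable; first exact: finite_finset.
  by move=> j _; apply: mle; exact: mdiv.
case: (s l).
- by rewrite (_ : [set om | pi om l = true] = [set om | pi om l]).
- rewrite (_ : [set om | pi om l = false] = ~` [set om | pi om l]).
    exact: measurableC.
  by apply/predeqP => om /=; split => [-> //|/negP/negbTE].
Qed.
End wmeas.


Section mainsec.
Context (R : realType) (d : measure_display) (T : measurableType d) (P : probability T R).
Context (Omega : finType) (i0 : Omega) (e : Omega -> {RV P >-> R}).
Hypothesis hind : mutually_independent e.
Hypothesis hexp : forall i (A : set R), measurable A ->
              distribution P (e i) A = exponential_prob 1 A.

Definition Aw (w : Omega -> R) k := Ev e k (fun j => w k / w j).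

Lemma Ev_mono k (c c' : Omega -> R) : (forall j, 0 < c j) -> (forall j, c j <= c' j) ->
  Ev e k c `<=` Ev e k c'.
Proof.
move=> hc hcc om [h0 h]; split => // j jk.
have hj := h j jk.
have ej : 0 < e j om.
  rewrite ltNge; apply/negP => ej.
  have : c j * e j om <= 0 by rewrite mulr_ge0_le0 // ltW.
  lra.
apply: lt_le_trans hj _; rewrite ler_pM2r //.
Qed.

Lemma Ev_W (w : Omega -> R) (hw : forall j, 0 < w j) k : Aw w k `<=` W i0 e w k.
Proof.
move=> om [h0 h]; rewrite /W /=; apply: winner_strict => j jk.
have := h j jk; rewrite ltr_pdivrMr //.
have -> : e j om / w j * w k = w k / w j * e j om by ring.
by [].
Qed.

Lemma sum_inv (w : Omega -> R) (hw : full_support_distr w) k :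
  1 + \sum_(j | j != k) (w k / w j)^-1 = (w k)^-1.
Proof.
case: hw => hpos hs.
under eq_bigr do rewrite invf_div.
rewrite -mulr_suml.
have : \sum_(j | j != k) w j = 1 - w k by rewrite -hs [in RHS](bigD1 k) //= addrC addrK.
move=> ->; have := hpos k => hk; field; lra.
Qed.

Lemma Aw_ge (w : Omega -> R) (hw : full_support_distr w) k : w k <= pr P (Aw w k).
Proof.
have hpos := hw.1.
have hc : forall j, 0 < w k / w j by move=> j; apply: divr_gt0.
have := race_lb hind hexp k hc; rewrite /Sc sum_inv // => h.
by move: h; rewrite ler_pdivlMr // mul1r.
Qed.

Lemma mAw (w : Omega -> R) k : measurable (Aw w k).
Proof. exact: mEv. Qed.

Lemma Aw_disj (w : Omega -> R) (hw : full_support_distr w) : trivIset setT (Aw w).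
Proof.
move=> k l _ _ [om [h1 h2]].
have a := Ev_W hw.1 h1; have b := Ev_W hw.1 h2.
rewrite /W /= in a b; by rewrite -a -b.
Qed.

Lemma Aw_le (w : Omega -> R) (hw : full_support_distr w) k : pr P (Aw w k) <= w k.
Proof.
have hs : \sum_l pr P (Aw w l) <= 1.
  rewrite -pr_fin_bigcup; [|exact: Aw_disj hw| exact: mAw].
  apply: pr_le1; apply: fin_bigcup_measurable; [exact: finite_finset| move=> l _; exact: mAw].
have h2 : \sum_(l | l != k) w l <= \sum_(l | l != k) pr P (Aw w l).
  by apply: ler_sum => l _; exact: Aw_ge.
have sw := hw.2.
rewrite (bigD1 k) //= in hs; rewrite (bigD1 k) //= in sw.
lra.
Qed.

Lemma Nw0 (w : Omega -> R) (hw : full_support_distr w) :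
  pr P (~` \bigcup_(k in setT) Aw w k) = 0.
Proof.
have mU : measurable (\bigcup_(k in setT) Aw w k).
  by apply: fin_bigcup_measurable; [exact: finite_finset| move=> l _; exact: mAw].
have h1 := pr_le1 P mU.
rewrite pr_C // pr_fin_bigcup //; [|exact: Aw_disj hw| exact: mAw].
rewrite pr_fin_bigcup // in h1; [|exact: Aw_disj hw| exact: mAw].
have h2 : \sum_l w l <= \sum_l pr P (Aw w l) by apply: ler_sum => l _; exact: Aw_ge.
rewrite hw.2 in h2; lra.
Qed.

Lemma min_inv (a b : R) : 0 < a -> 0 < b -> (Order.min a b)^-1 <= a^-1 + b^-1.
Proof.
move=> a0 b0; case: (leP a b) => h.
- by rewrite lerDl invr_ge0 ltW.
- by rewrite lerDr invr_ge0 ltW.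
Qed.

Definition Apq (p q : Omega -> R) k :=
  Ev e k (fun j => Order.min (q k / q j) (p k / p j)).

Lemma Apq_sub p q (hp : full_support_distr p) (hq : full_support_distr q) k :
  Apq p q k `<=` Aw q k `&` Aw p k.
Proof.
have hc : forall j, 0 < Order.min (q k / q j) (p k / p j).
  by move=> j; rewrite lt_min; apply/andP; split; apply: divr_gt0; [exact: hq.1|exact: hq.1|exact: hp.1|exact: hp.1].
move=> om h; split.
- by apply: (Ev_mono hc _ h) => j; rewrite ge_min lexx.
- by apply: (Ev_mono hc _ h) => j; rewrite ge_min lexx orbT.
Qed.

Lemma Apq_lb p q (hp : full_support_distr p) (hq : full_support_distr q) k :
  p k * q k / (p k + q k) <= pr P (Apq p q k).
Proof.
have pk := hp.1 k; have qk := hq.1 k.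
have hc : forall j, 0 < Order.min (q k / q j) (p k / p j).
  by move=> j; rewrite lt_min; apply/andP; split; apply: divr_gt0; [exact: hq.1|exact: hq.1|exact: hp.1|exact: hp.1].
have h := race_lb hind hexp k hc.
have hS : 1 + Sc k (fun j => Order.min (q k / q j) (p k / p j)) <= (q k)^-1 + (p k)^-1.
  have e1 := sum_inv hq k; have e2 := sum_inv hp k.
  have : Sc k (fun j => Order.min (q k / q j) (p k / p j)) <=
     \sum_(j | j != k) (q k / q j)^-1 + \sum_(j | j != k) (p k / p j)^-1.
    rewrite /Sc -big_split /=; apply: ler_sum => j _; apply: min_inv.
      by apply: divr_gt0 => //; exact: hq.1.
    by apply: divr_gt0 => //; exact: hp.1.
  lra.
have pr0 : 0 <= pr P (Apq p q k) by apply: pr_ge0; exact: mEv.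
have h2 : 1 <= pr P (Apq p q k) * ((q k)^-1 + (p k)^-1).
  apply: le_trans h _; apply: ler_wpM2l => //.
rewrite ler_pdivrMr; last lra.
have h3 := ler_wpM2l (ltW (mulr_gt0 pk qk)) h2.
apply: le_trans (le_trans _ h3) _.
- by rewrite mulr1.
- rewrite le_eqVlt; apply/orP; left; apply/eqP; field; lra.
Qed.

Lemma TV_min (p q : Omega -> R) (hp : full_support_distr p) (hq : full_support_distr q) :
  \sum_k Order.min (q k) (p k) = 1 - D_TV p q.
Proof.
have hk : forall k, Order.min (q k) (p k) = 2^-1 * (p k + q k) - 2^-1 * `|p k - q k|.
  move=> k; case: (leP (q k) (p k)) => h.
  - by rewrite ger0_norm; [field | lra].
  - by rewrite ler0_norm; [field | lra].
under eq_bigr do rewrite hk.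
rewrite sumrB -mulr_sumr big_split /= hp.2 hq.2 /D_TV -mulr_sumr; by field.
Qed.

End mainsec.


Unset Implicit Arguments. Set Strict Implicit.

Theorem lemma1 (R : realType) (Omega : finType) (i0 : Omega)
    (p q : Omega -> R)
    (hp : full_support_distr p) (hq : full_support_distr q)
    (d : measure_display) (T : measurableType d) (P : probability T R)
    (e : Omega -> {RV P >-> R})
    (hind : mutually_independent e)
    (hexp : forall i (A : set R), measurable A ->
              distribution P (e i) A = exponential_prob 1 A) :
  let P_accept1 :=
    P [set w | race_winner i0 q (fun i => e i w) =
               race_winner i0 p (fun i => e i w)] in
  ((1 - D_TV p q)%:E >= P_accept1)%E /\ (P_accept1 >= (D_HM p q)%:E)%E.
Proof.
move=> PA; rewrite /PA.
set A := [set w | _ = _].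
have mA : measurable A.
  have -> : A = \bigcup_(k in setT) (W i0 e q k `&` W i0 e p k).
    apply/predeqP => om; rewrite /A /W /=; split => [h|[k _ [h1 h2]]].
    - by exists (race_winner i0 p (fun i => e i om)) => //; split.
    - by rewrite h1 h2.
  apply: fin_bigcup_measurable; [exact: finite_finset| move=> k _].
  by apply: measurableI; exact: mW.
rewrite (prE P mA) !lee_fin; split.
- pose U := \bigcup_(k in setT) (Aw e q k `&` Aw e p k).
  pose Nq := ~` \bigcup_(k in setT) Aw e q k.
  pose Np := ~` \bigcup_(k in setT) Aw e p k.
  have mU : measurable U.
    apply: fin_bigcup_measurable; [exact: finite_finset| move=> k _].
    by apply: measurableI; exact: mAw.
  have mNq : measurable Nq.
    apply: measurableC; apply: fin_bigcup_measurable; [exact: finite_finset| move=> k _].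
    exact: mAw.
  have mNp : measurable Np.
    apply: measurableC; apply: fin_bigcup_measurable; [exact: finite_finset| move=> k _].
    exact: mAw.
  have sub : A `<=` U `|` (Nq `|` Np).
    move=> om Aom.
    have [[k _ hk]|nq] := pselect ((\bigcup_(k in setT) Aw e q k) om); last by right; left.
    have [[l _ hl]|np] := pselect ((\bigcup_(k in setT) Aw e p k) om); last by right; right.
    left; exists k => //; split => //.
    have a := Ev_W i0 hq.1 hk; have b := Ev_W i0 hp.1 hl.
    have kl : k = l by rewrite -a -b; exact: Aom.
    by rewrite kl.
  have h1 : pr P A <= pr P (U `|` (Nq `|` Np)).
    by apply: pr_le => //; apply: measurableU => //; exact: measurableU.
  have h2 : pr P (U `|` (Nq `|` Np)) <= pr P U + pr P (Nq `|` Np).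
    by apply: pr_subU => //; exact: measurableU.
  have h3 : pr P (Nq `|` Np) <= pr P Nq + pr P Np by exact: pr_subU.
  have n1 : pr P Nq = 0 by exact: (Nw0 i0 hind hexp hq).
  have n2 : pr P Np = 0 by exact: (Nw0 i0 hind hexp hp).
  have hU : pr P U = \sum_k pr P (Aw e q k `&` Aw e p k).
    apply: pr_fin_bigcup.
    - move=> k l _ _ [om [[a _] [b _]]]; apply: (Aw_disj i0 hq) => //; exists om; split.
        exact: a.
      exact: b.
    - by move=> k; apply: measurableI; exact: mAw.
  have hsum : \sum_k pr P (Aw e q k `&` Aw e p k) <= \sum_k Order.min (q k) (p k).
    apply: ler_sum => k _; rewrite le_min; apply/andP; split.
    - apply: le_trans (Aw_le i0 hind hexp hq k).
      by apply: pr_le; [apply: measurableI; exact: mAw| exact: mAw| exact: subIsetl].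
    - apply: le_trans (Aw_le i0 hind hexp hp k).
      by apply: pr_le; [apply: measurableI; exact: mAw| exact: mAw| exact: subIsetr].
  rewrite -(TV_min hp hq); lra.
- have mV : measurable (\bigcup_(k in setT) Apq e p q k).
    apply: fin_bigcup_measurable; [exact: finite_finset| move=> k _].
    exact: mEv.
  have hsub : \bigcup_(k in setT) Apq e p q k `<=` A.
    move=> om [k _ h]; have [a b] := Apq_sub hp hq h.
    have a' := Ev_W i0 hq.1 a; have b' := Ev_W i0 hp.1 b.
    by rewrite /A /= a' b'.
  have disj : trivIset setT (Apq e p q).
    move=> k l _ _ [om [h1 h2]].
    have [a _] := Apq_sub hp hq h1; have [b _] := Apq_sub hp hq h2.
    by apply: (Aw_disj i0 hq) => //; exists om; split; [exact: a| exact: b].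
  have : pr P (\bigcup_(k in setT) Apq e p q k) <= pr P A by exact: pr_le.
  rewrite pr_fin_bigcup //; last by move=> k; exact: mEv.
  move=> h; rewrite /D_HM; apply: le_trans h; apply: ler_sum => k _.
  exact: Apq_lb.
Qed.
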